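(* If $X$ and $Y$ are weakly Alster spaces, then $X\times Y$ is weakly Alster.
   Context: All spaces are infinite ${\sf T}_1$ topological spaces. For a space $Z$, $\mathcal{G}_K$ is the family of all collections $\mathcal{U}$ of ${\sf G}_\delta$ subsets of $Z$ with $Z\notin\mathcal{U}$ such that each compact subset of $Z$ is contained in some member of $\mathcal{U}$. $Z$ is weakly Alster if every member of $\mathcal{G}_K$ (for $Z$) has a countable subcollection whose union is dense in $Z$. *)

(* Defs.v *)
From Stdlib Require Import List.

Set Implicit Arguments.

Record space := Space {
  carrier :> Type;
  open : (carrier -> Prop) -> Prop;
  open_full : open (fun _ => True);
  open_inter : forall U V, open U -> open V -> open (fun x => U x /\ V x);
  open_union : forall F : (carrier -> Prop) -> Prop,
      (forall U, F U -> open U) -> open (fun x => exists U, F U /\ U x)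
}.

Arguments open {s} _.

Section Notions.
Variable Z : space.

Definition T1 : Prop :=
  forall x y : Z, x <> y -> exists U, open U /\ U x /\ ~ U y.

Definition infinite_space : Prop :=
  forall l : list Z, exists x, ~ In x l.

Definition compact (K : Z -> Prop) : Prop :=
  forall F : (Z -> Prop) -> Prop,
    (forall U, F U -> open U) ->
    (forall x, K x -> exists U, F U /\ U x) ->
    exists l : list (Z -> Prop),
      (forall U, In U l -> F U) /\ (forall x, K x -> exists U, In U l /\ U x).

Definition Gdelta (G : Z -> Prop) : Prop :=
  exists f : nat -> (Z -> Prop),
    (forall n, open (f n)) /\ (forall x, G x <-> forall n, f n x).

Definition dense (D : Z -> Prop) : Prop :=
  forall U, open U -> (exists x, U x) -> exists x, U x /\ D x.

Definition in_GK (C : (Z -> Prop) -> Prop) : Prop :=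
  (forall U, C U -> Gdelta U) /\
  (forall U, C U -> exists x, ~ U x) /\
  (forall K, compact K -> exists U, C U /\ forall x, K x -> U x).

(* countable subcollection with dense union (nat-indexed; repetitions allowed) *)
Definition weakly_Alster : Prop :=
  forall C, in_GK C ->
    exists f : nat -> (Z -> Prop),
      (forall n, C (f n)) /\ dense (fun x => exists n, f n x).

End Notions.

Section Product.
Variables X Y : space.

Definition prod_open (W : X * Y -> Prop) : Prop :=
  forall p, W p -> exists U V, open U /\ open V /\ U (fst p) /\ V (snd p) /\
    (forall a b, U a -> V b -> W (a, b)).

Lemma prod_open_full : prod_open (fun _ => True).
Proof.
  intros p _. exists (fun _ => True), (fun _ => True).
  repeat split; auto using open_full.
Qed.

Lemma prod_open_inter : forall U V, prod_open U -> prod_open V ->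
  prod_open (fun x => U x /\ V x).
Proof.
  intros U V HU HV p [Up Vp].
  destruct (HU p Up) as (A & B & oA & oB & Ap & Bp & HAB).
  destruct (HV p Vp) as (C & D & oC & oD & Cp & Dp & HCD).
  exists (fun x => A x /\ C x), (fun y => B y /\ D y).
  repeat split; auto using open_inter.
  - apply HAB; tauto.
  - apply HCD; tauto.
Qed.

Lemma prod_open_union : forall F : (X * Y -> Prop) -> Prop,
  (forall U, F U -> prod_open U) -> prod_open (fun x => exists U, F U /\ U x).
Proof.
  intros F HF p [W [FW Wp]].
  destruct (HF W FW p Wp) as (A & B & oA & oB & Ap & Bp & HAB).
  exists A, B. repeat split; auto.
  intros a b Aa Bb. exists W. split; auto.
Qed.

Definition prod_space : space :=
  @Space (X * Y)%type prod_open prod_open_full prod_open_inter prod_open_union.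

End Product.

(* Main.v *)
Require Import Defs.
From Stdlib Require Import List Classical ClassicalEpsilon FunctionalExtensionality PropExtensionality.
From Stdlib Require Cantor.

#[local] Arguments Gdelta {Z} _.
#[local] Arguments dense {Z} _.
#[local] Arguments in_GK {Z} _.
#[local] Arguments compact {Z} _.
#[local] Arguments prod_open {X Y} _.

Lemma set_ext {A : Type} (U V : A -> Prop) : (forall x, U x <-> V x) -> U = V.
Proof.
  intros H. apply functional_extensionality. intros x.
  apply propositional_extensionality. apply H.
Qed.

Lemma my_choice {A B : Type} (R : A -> B -> Prop) :
  (forall x, exists y, R x y) -> exists f : A -> B, forall x, R x (f x).
Proof.
  intros H. exists (fun x => proj1_sig (constructive_indefinite_description _ (H x))).
  intros x. exact (proj2_sig (constructive_indefinite_description _ (H x))).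
Qed.

Lemma open_empty (Z : space) : @open Z (fun _ => False).
Proof.
  assert (E : (fun x : Z => exists U : Z -> Prop, False /\ U x) = (fun _ => False)).
  { apply set_ext. intros x; split; [intros [U [[] _]] | intros []]. }
  rewrite <- E. apply open_union. intros U [].
Qed.

Lemma open_or (Z : space) (U V : Z -> Prop) :
  open U -> open V -> open (fun z => U z \/ V z).
Proof.
  intros HU HV.
  assert (E : (fun x : Z => exists W : Z -> Prop, (W = U \/ W = V) /\ W x)
              = (fun z => U z \/ V z)).
  { apply set_ext. intros x; split.
    - intros [W [[-> | ->] Wx]]; auto.
    - intros [Ux | Vx]; [exists U | exists V]; auto. }
  rewrite <- E. apply open_union. intros W [-> | ->]; auto.
Qed.

Fixpoint union_list {Z : Type} (l : list (Z -> Prop)) : Z -> Prop :=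
  match l with
  | nil => fun _ => False
  | U :: l' => fun z => U z \/ union_list l' z
  end.

Lemma cover_lemma (Z : space) (K : Z -> Prop) (R : (Z -> Prop) -> Prop) :
  @compact Z K -> R (fun _ => False) ->
  (forall U U', R U -> R U' -> R (fun z => U z \/ U' z)) ->
  (forall x, K x -> exists U, open U /\ U x /\ R U) ->
  exists U, open U /\ (forall x, K x -> U x) /\ R U.
Proof.
  intros HK R0 RU Hx.
  destruct (HK (fun U => open U /\ R U)) as [l [Hl Hcov]].
  - intros U [o _]; exact o.
  - intros x Kx. destruct (Hx x Kx) as [U [o [Ux RU']]]. exists U; auto.
  - exists (union_list l). split; [|split].
    + clear Hcov. induction l as [|U l IH]; simpl.
      * apply open_empty.
      * apply open_or.
        -- apply (Hl U). left; auto.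
        -- apply IH. intros W HW. apply Hl. right; auto.
    + intros x Kx. destruct (Hcov x Kx) as [U [Ul Ux]].
      clear Hl Hcov. induction l as [|W l IH]; simpl in *; [contradiction|].
      destruct Ul as [-> | Ul]; auto.
    + clear Hcov. induction l as [|U l IH]; simpl; auto.
      apply RU.
      * apply (Hl U). left; auto.
      * apply IH. intros W HW. apply Hl. right; auto.
Qed.

Arguments cover_lemma {Z K R}.

Section Prod.
Variables X Y : space.

Lemma tube (K : X -> Prop) (W : X * Y -> Prop) (y : Y) :
  @compact X K -> prod_open W -> (forall x, K x -> W (x, y)) ->
  exists U, open U /\ (forall x, K x -> U x) /\
  exists V, open V /\ V y /\ forall a b, U a -> V b -> W (a, b).
Proof.
  intros HK HW Hxy.
  apply (cover_lemma (R := fun U => exists V, open V /\ V y /\ forall a b, U a -> V b -> W (a, b)) HK).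
  - exists (fun _ => True). repeat split; auto using open_full. intros a b [].
  - intros U U' [V [oV [Vy HV]]] [V' [oV' [V'y HV']]].
    exists (fun z => V z /\ V' z). repeat split; auto using open_inter.
    intros a b [Ua | Ua] [Vb V'b]; auto.
  - intros x Kx. destruct (HW (x, y) (Hxy x Kx)) as (U & V & oU & oV & Ux & Vy & H).
    exists U. repeat split; auto. exists V. auto.
Qed.

Lemma wallace (K : X -> Prop) (L : Y -> Prop) (W : X * Y -> Prop) :
  @compact X K -> @compact Y L -> prod_open W ->
  (forall a b, K a -> L b -> W (a, b)) ->
  exists U V, open U /\ open V /\ (forall x, K x -> U x) /\ (forall y, L y -> V y) /\
    forall a b, U a -> V b -> W (a, b).
Proof.
  intros HK HL HW H.
  destruct (cover_lemma (R := fun V => exists U, open U /\ (forall x, K x -> U x) /\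
     forall a b, U a -> V b -> W (a, b)) HL) as [V [oV [LV [U [oU [KU HUV]]]]]].
  - exists (fun _ => True). repeat split; auto using open_full. intros a b _ [].
  - intros V V' [U [oU [KU HU]]] [U' [oU' [KU' HU']]].
    exists (fun z => U z /\ U' z). repeat split; auto using open_inter; try tauto.
    intros a b [Ua U'a] [Vb | Vb]; auto.
  - intros y Ly. destruct (@tube K W y HK HW) as [U [oU [KU [V [oV [Vy HV]]]]]].
    + intros x Kx; auto.
    + exists V. repeat split; auto. exists U; auto.
  - exists U, V. auto.
Qed.

Lemma prod_compact (K : X -> Prop) (L : Y -> Prop) :
  @compact X K -> @compact Y L ->
  @compact (prod_space X Y) (fun p => K (fst p) /\ L (snd p)).
Proof.
  intros HK HL F HF Hcov.
  destruct (cover_lemma (R := fun V => exists l : list (X * Y -> Prop),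
      (forall U, In U l -> F U) /\ forall a b, K a -> V b -> exists U, In U l /\ U (a, b)) HL)
    as [V [_ [LV [l [Hl Hc]]]]].
  - exists nil. split; [intros U []| intros a b _ []].
  - intros V V' [l [Hl Hc]] [l' [Hl' Hc']]. exists (l ++ l'). split.
    + intros U HU. apply in_app_or in HU. destruct HU; auto.
    + intros a b Ka [Vb | Vb].
      * destruct (Hc a b Ka Vb) as [U [HU Uab]]. exists U. split; auto. apply in_or_app; auto.
      * destruct (Hc' a b Ka Vb) as [U [HU Uab]]. exists U. split; auto. apply in_or_app; auto.
  - intros y Ly.
    destruct (cover_lemma (R := fun U => exists V, open V /\ V y /\ exists l : list (X * Y -> Prop),
      (forall W, In W l -> F W) /\ forall a b, U a -> V b -> exists W, In W l /\ W (a, b)) HK)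
      as [U [_ [KU [V [oV [Vy [l [Hl Hc]]]]]]]].
    + exists (fun _ => True). split; [apply open_full|split; auto].
      exists nil. split; [intros U []| intros a b []].
    + intros U U' [V [oV [Vy [l [Hl Hc]]]]] [V' [oV' [V'y [l' [Hl' Hc']]]]].
      exists (fun z => V z /\ V' z). split; [apply open_inter; auto|split; auto].
      exists (l ++ l'). split.
      * intros W HW. apply in_app_or in HW. destruct HW; auto.
      * intros a b [Ua | Ua] [Vb V'b].
        -- destruct (Hc a b Ua Vb) as [W [HW Wab]]. exists W. split; auto. apply in_or_app; auto.
        -- destruct (Hc' a b Ua V'b) as [W [HW Wab]]. exists W. split; auto. apply in_or_app; auto.
    + intros x Kx. destruct (Hcov (x, y) (conj Kx Ly)) as [W [FW Wxy]].
      destruct (HF W FW (x, y) Wxy) as (U & V & oU & oV & Ux & Vy & HUV).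
      exists U. split; [auto|split; [auto|]]. exists V. split; [auto|split; [auto|]].
      exists (W :: nil). split.
      * intros W' [<- | []]; auto.
      * intros a b Ua Vb. exists W. split; [left; auto| auto].
    + exists V. split; [auto|split; [auto|]]. exists l. split; auto.
  - exists l. split; auto. intros [a b] [Ka Lb]. apply Hc; auto.
Qed.

End Prod.

Lemma Gdelta_inter (Z : space) (h : nat -> Z -> Prop) :
  (forall m, Gdelta (h m)) -> Gdelta (fun z => forall m, h m z).
Proof.
  intros H. destruct (my_choice _ H) as [f Hf].
  exists (fun n => f (fst (Cantor.of_nat n)) (snd (Cantor.of_nat n))). split.
  - intros n. apply (proj1 (Hf _)).
  - intros x; split.
    + intros Hx n. apply (proj2 (Hf _)). apply Hx.
    + intros Hx m. apply (proj2 (Hf m)). intros n.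
      specialize (Hx (Cantor.to_nat (m, n))). rewrite Cantor.cancel_of_to in Hx. exact Hx.
Qed.

Lemma gdelta_tube (X Y : space) (C : (prod_space X Y -> Prop) -> Prop)
  (K : X -> Prop) (L : Y -> Prop) :
  in_GK C -> @compact X K -> @compact Y L ->
  exists A, Gdelta A /\ (forall x, K x -> A x) /\ exists H, Gdelta H /\ (forall y, L y -> H y) /\
  exists G, C G /\ forall a b, A a -> H b -> G (a, b).
Proof.
  intros [HG [_ Hc]] HK HL.
  destruct (Hc _ (@prod_compact X Y K L HK HL)) as [G [CG KLG]].
  destruct (HG G CG) as [f [fo fG]].
  assert (Hn : forall n, exists p : (X -> Prop) * (Y -> Prop),
     open (fst p) /\ open (snd p) /\ (forall x, K x -> fst p x) /\ (forall y, L y -> snd p y) /\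
     forall a b, fst p a -> snd p b -> f n (a, b)).
  { intros n. destruct (@wallace X Y K L (f n) HK HL) as (U & V & H1 & H2 & H3 & H4 & H5).
    - apply fo.
    - intros a b Ka Lb. apply (proj1 (fG (a, b))). apply (KLG (a, b)). simpl; auto.
    - exists (U, V). simpl; auto. }
  destruct (my_choice _ Hn) as [p Hp].
  exists (fun a => forall n, fst (p n) a). split.
  { exists (fun n => fst (p n)). split; [intros n; apply (Hp n)| tauto]. }
  split. { intros x Kx n. apply (Hp n); auto. }
  exists (fun b => forall n, snd (p n) b). split.
  { exists (fun n => snd (p n)). split; [intros n; apply (Hp n)| tauto]. }
  split. { intros y Ly n. apply (Hp n); auto. }
  exists G. split; auto. intros a b Ha Hb. apply (proj2 (fG (a, b))).
  intros n. apply (Hp n); auto.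
Qed.

Lemma step_K (X Y : space) (C : (prod_space X Y -> Prop) -> Prop) (K : X -> Prop) :
  in_GK C -> weakly_Alster Y -> @compact X K ->
  exists A, Gdelta A /\ (forall x, K x -> A x) /\
  exists g : nat -> (prod_space X Y -> Prop), (forall m, C (g m)) /\
  exists D, dense D /\ forall a b, A a -> D b -> exists m, g m (a, b).
Proof.
  intros HC WY HK.
  destruct (classic (exists A, Gdelta A /\ (forall x, K x -> A x) /\
      exists G, C G /\ forall a b, A a -> G (a, b))) as [[A [GA [KA [G [CG HG]]]]] | NA].
  - exists A. repeat split; auto. exists (fun _ => G). split; auto.
    exists (fun _ => True). split.
    + intros U _ [x Ux]. exists x; auto.
    + intros a b Aa _. exists 0. auto.
  - set (DK := fun H : Y -> Prop => Gdelta H /\ (exists y, ~ H y) /\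
       exists A, Gdelta A /\ (forall x, K x -> A x) /\
       exists G, C G /\ forall a b, A a -> H b -> G (a, b)).
    assert (GK : in_GK DK).
    { split; [intros U [h _]; exact h|split; [intros U [_ [h _]]; exact h|]].
      intros L HL. destruct (@gdelta_tube X Y C K L HC HK HL) as [A [GA [KA [H [GH [LH [G [CG HG]]]]]]]].
      exists H. split; auto. split; auto. split.
      - apply NNPP. intros Hn. apply NA. exists A. repeat split; auto.
        exists G. split; auto. intros a b Aa. apply HG; auto.
        apply NNPP. intros Hb. apply Hn. exists b; auto.
      - exists A. repeat split; auto. exists G; auto. }
    destruct (WY DK GK) as [h [Hh Hd]].
    assert (Hm : forall m, exists q : (X -> Prop) * (prod_space X Y -> Prop),
       Gdelta (fst q) /\ (forall x, K x -> fst q x) /\ C (snd q) /\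
       forall a b, fst q a -> h m b -> snd q (a, b)).
    { intros m. destruct (Hh m) as [_ [_ [A [GA [KA [G [CG HG]]]]]]].
      exists (A, G). simpl; auto. }
    destruct (my_choice _ Hm) as [q Hq].
    exists (fun a => forall m, fst (q m) a). split.
    { apply Gdelta_inter. intros m; apply (Hq m). }
    split. { intros x Kx m. apply (Hq m); auto. }
    exists (fun m => snd (q m)). split. { intros m; apply (Hq m). }
    exists (fun b => exists m, h m b). split; auto.
    intros a b Ha [m Hb]. exists m. apply (Hq m); auto.
Qed.

Theorem theorem5p11 (X Y : space) :
  T1 X -> infinite_space X -> T1 Y -> infinite_space Y ->
  weakly_Alster X -> weakly_Alster Y -> weakly_Alster (prod_space X Y).
Proof.
  intros _ _ _ _ WX WY C HC.
  set (Prp := fun A : X -> Prop => exists g : nat -> (prod_space X Y -> Prop), (forall m, C (g m)) /\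
        exists D : Y -> Prop, dense D /\ forall a b, A a -> D b -> exists m, g m (a, b)).
  destruct (classic (exists A, Prp A /\ forall x, A x)) as [[A [[g [Cg [D [dD HD]]]] HA]] | NA].
  - exists g. split; auto.
    intros W oW [p Wp].
    destruct (oW p Wp) as (U & V & oU & oV & Up & Vp & HUV).
    destruct (dD V oV (ex_intro _ _ Vp)) as [b [Vb Db]].
    destruct (HD (fst p) b (HA _) Db) as [m Hm].
    exists (fst p, b). split; [apply HUV; auto | exists m; auto].
  - set (EX := fun A : X -> Prop => Gdelta A /\ (exists x, ~ A x) /\ Prp A).
    assert (GK : in_GK EX).
    { split; [intros U [h _]; exact h|split; [intros U [_ [h _]]; exact h|]].
      intros K HK. destruct (@step_K X Y C K HC WY HK) as [A [GA [KA HP]]].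
      exists A. split; auto. split; auto. split; auto.
      apply NNPP. intros Hn. apply NA. exists A. split; auto.
      intros x. apply NNPP. intros Hx. apply Hn. exists x; auto. }
    destruct (WX EX GK) as [a [Ha Hd]].
    assert (Hj : forall j, exists q : (nat -> (prod_space X Y -> Prop)) * (Y -> Prop),
       (forall m, C (fst q m)) /\ dense (snd q) /\
       forall x b, a j x -> snd q b -> exists m, fst q m (x, b)).
    { intros j. destruct (Ha j) as [_ [_ [g [Cg [D [dD HD]]]]]]. exists (g, D). simpl; auto. }
    destruct (my_choice _ Hj) as [q Hq].
    exists (fun n => fst (q (fst (Cantor.of_nat n))) (snd (Cantor.of_nat n))). split.
    { intros n. apply (Hq _). }
    intros W oW [p Wp].
    destruct (oW p Wp) as (U & V & oU & oV & Up & Vp & HUV).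
    destruct (Hd U oU (ex_intro _ _ Up)) as [x [Ux [j Hx]]].
    destruct (Hq j) as [_ [dD HD]].
    destruct (dD V oV (ex_intro _ _ Vp)) as [b [Vb Db]].
    destruct (HD x b Hx Db) as [m Hm].
    exists (x, b). split; [apply HUV; auto|].
    exists (Cantor.to_nat (j, m)). rewrite Cantor.cancel_of_to. exact Hm.
Qed.
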